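(* Let $T\colon\mathscr C\to\mathscr C$ be a homeomorphism of the Cantor set with exactly one fixed point $x^0$ such that for every $x\ne x^0$ and every $m\in\mathbb N$ the set $\{T^{mk}(x):k\in\mathbb Z\}$ is dense in $\mathscr C$. Let $\mathscr C=A\sqcup B$ be a partition into clopen sets with $x^0\in A$. Let $\hat X=A\times\{0,1\}\sqcup B\times\{0\}$ and define $f\colon\hat X\to\hat X$ by $f(x,i)=(T(x),1)$ if $i=0$ and $T(x)\in A$, and $f(x,i)=(T(x),0)$ otherwise. For $x\in\mathscr C$ let $N(x,B)=\min\{k\in\mathbb N_0: T^{-k}(x)\in B\}$ (with $N(x,B)=\infty$ if no such $k$ exists), let $U=\{x\in\mathscr C: N(x,B)<\infty\}$, and let $X=\overline{\{(x,N(x,B)\bmod 2):x\in U\}}$ (closure in $\hat X$). Then for every $m\in\mathbb N$, $X$ is the least closed subset of $\hat X$ that contains $B\times\{0\}$ and is $f^m$-invariant (i.e. satisfies $f^m(S)\subseteq S$).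
   Context: $\mathscr C$ denotes the Cantor set; $\mathbb N_0=\{0,1,2,\dots\}$. *)

(* Defs.v *)
(* The Cantor set is modelled by [cantor_space]
   (bool^nat with the product topology), which is homeomorphic to the
   middle-thirds Cantor set; the statement is purely topological. *)
From HB Require Import structures.
From mathcomp Require Import all_boot all_order all_algebra.
From mathcomp Require Import all_classical all_reals all_analysis.
Set Implicit Arguments. Unset Strict Implicit. Unset Printing Implicit Defensive.
Import Order.TTheory GRing.Theory Num.Theory.
Local Open Scope classical_set_scope.

Definition zpow {X : Type} (T Tinv : X -> X) (z : int) : X -> X :=
  match z with
  | Posz n => iter n T
  | Negz n => iter n.+1 Tinv
  end.

(* Xhat = A x {0,1} ⊔ B x {0}, with {0,1} coded as bool (0 = false, 1 = true) *)
Definition Xhat (A B : set cantor_space) : set (cantor_space * bool) :=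
  [set p | A p.1 \/ (B p.1 /\ p.2 = false)].

Definition fmapX (T : cantor_space -> cantor_space) (A : set cantor_space)
  (p : cantor_space * bool) : cantor_space * bool :=
  if (p.2 == false) && `[< A (T p.1) >] then (T p.1, true) else (T p.1, false).

Definition NxB_is (Tinv : cantor_space -> cantor_space) (B : set cantor_space)
  (x : cantor_space) (k : nat) : Prop :=
  B (iter k Tinv x) /\ (forall j, (j < k)%N -> ~ B (iter j Tinv x)).

Definition Uset (Tinv : cantor_space -> cantor_space) (B : set cantor_space) :
  set cantor_space := [set x | exists k, NxB_is Tinv B x k].

Definition graphN (Tinv : cantor_space -> cantor_space) (B : set cantor_space) :
  set (cantor_space * bool) :=
  [set p | exists k, NxB_is Tinv B p.1 k /\ p.2 = odd k].

(* X = closure of graphN in Xhat (relative closure = closure ∩ Xhat) *)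
Definition Xset (Tinv : cantor_space -> cantor_space) (A B : set cantor_space) :
  set (cantor_space * bool) :=
  closure (graphN Tinv B) `&` Xhat A B.

(* Main.v *)
Require Import Defs.
From HB Require Import structures.
From mathcomp Require Import all_boot all_order all_algebra.
From mathcomp Require Import all_classical all_reals all_analysis.
From mathcomp Require Import zify.
Import Order.TTheory GRing.Theory Num.Theory.
Local Open Scope classical_set_scope.

Section Aux.
Variables (T Tinv : cantor_space -> cantor_space).
Hypotheses (TK : cancel T Tinv) (TKi : cancel Tinv T).

Lemma iterK n : cancel (iter n T) (iter n Tinv).
Proof. elim: n => // n IH y; rewrite iterSr iterS TK; exact: IH. Qed.

Lemma iterKi n : cancel (iter n Tinv) (iter n T).
Proof. elim: n => // n IH y; rewrite iterSr iterS TKi; exact: IH. Qed.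

Lemma zpowS (a : int) y : zpow T Tinv (a + 1)%R y = T (zpow T Tinv a y).
Proof.
case: a => [n|n].
  by have -> : (Posz n + 1 = Posz n.+1)%R by lia.
case: n => [|n].
  have -> : (Negz 0 + 1 = Posz 0)%R by lia.
  by rewrite /= TKi.
have -> : (Negz n.+1 + 1 = Negz n)%R by lia.
by rewrite /= TKi.
Qed.

Lemma zpowP (a : int) y : zpow T Tinv (a - 1)%R y = Tinv (zpow T Tinv a y).
Proof.
have E : a = ((a - 1) + 1)%R by lia.
by rewrite [in RHS]E zpowS TK.
Qed.

Lemma zpowDn (b : int) (n : nat) y :
  zpow T Tinv (b + n%:Z)%R y = iter n T (zpow T Tinv b y).
Proof.
elim: n => [|n IH]; first by rewrite addr0.
have -> : (b + n.+1%:Z = (b + n%:Z) + 1)%R by lia.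
by rewrite zpowS IH.
Qed.

Lemma zpowBn (b : int) (n : nat) y :
  zpow T Tinv (b - n%:Z)%R y = iter n Tinv (zpow T Tinv b y).
Proof.
elim: n => [|n IH]; first by rewrite subr0.
have -> : (b - n.+1%:Z = (b - n%:Z) - 1)%R by lia.
by rewrite zpowP IH.
Qed.

Lemma zpowM_pos (m n : nat) y :
  zpow T Tinv (m%:Z * n%:Z)%R y = iter n (iter m T) y.
Proof. by rewrite -PoszM /= mulnC iterM. Qed.

Lemma zpowM_neg (m n : nat) y :
  zpow T Tinv (m%:Z * Negz n)%R y = iter n.+1 (iter m Tinv) y.
Proof.
have -> : (m%:Z * Negz n = 0 - (n.+1 * m)%N%:Z)%R by lia.
by rewrite zpowBn /= iterM.
Qed.

End Aux.
Section Graph.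
Variables (T Tinv : cantor_space -> cantor_space) (A B : set cantor_space).
Hypotheses (TK : cancel T Tinv) (TKi : cancel Tinv T).
Hypotheses (AB0 : A `&` B = set0) (ABT : A `|` B = setT).

Lemma fmapXE p : fmapX T A p = (T p.1, (p.2 == false) && `[< A (T p.1) >]).
Proof. by rewrite /fmapX; case: ifP. Qed.

Lemma notAB y : A y -> B y -> False.
Proof. by move=> ay byy; have : (A `&` B) y by []; rewrite AB0. Qed.

Lemma AorB y : A y \/ B y.
Proof. by have : (A `|` B) y by rewrite ABT. Qed.

Lemma NxB_uniq y k k' : NxB_is Tinv B y k -> NxB_is Tinv B y k' -> k = k'.
Proof.
move=> [h1 h2] [h1' h2']; case: (ltngtP k k') => // H.
- by case: (h2' _ H).
- by case: (h2 _ H).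
Qed.

Lemma graph_step y k : NxB_is Tinv B y k ->
  exists k', NxB_is Tinv B (T y) k' /\ fmapX T A (y, odd k) = (T y, odd k').
Proof.
move=> [hB hlt]; rewrite fmapXE /=.
case: (pselect (B (T y))) => HB.
  exists 0%N; split; first by split => // j.
  have -> : `[< A (T y) >] = false by apply/asboolP => /notAB; apply.
  by rewrite andbF.
have HA : A (T y) by case: (AorB (T y)).
exists k.+1; split.
  split; first by rewrite iterSr TK.
  case=> [|j] Hj; first exact: HB.
  rewrite iterSr TK; exact: hlt.
by rewrite asboolT // andbT /=; case: (odd k).
Qed.

Lemma graph_iter n y k : NxB_is Tinv B y k ->
  exists k', NxB_is Tinv B (iter n T y) k' /\
     iter n (fmapX T A) (y, odd k) = (iter n T y, odd k').
Proof.
elim: n => [|n IH] H; first by exists k.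
have [k1 [H1 E1]] := IH H.
have [k2 [H2 E2]] := graph_step _ _ H1.
by exists k2; split => //=; rewrite E1 E2.
Qed.

Lemma fmapX_Xhat p : Xhat A B (fmapX T A p).
Proof.
rewrite fmapXE /Xhat /=.
case: (pselect (A (T p.1))) => HA; first by left.
by right; split; [case: (AorB (T p.1)) | rewrite (asboolF HA) andbF].
Qed.

Lemma graph_Xhat : graphN Tinv B `<=` Xhat A B.
Proof.
move=> [y b] [k [[hB hlt] /= Hb]]; rewrite /Xhat /= Hb.
case: k hB hlt Hb => [|k] hB hlt Hb; first by case: (AorB y); [left | right].
left; case: (AorB y) => // HB; by case: (hlt 0%N).
Qed.

End Graph.
Lemma iter_cont {X : topologicalType} (f : X -> X) n :
  continuous f -> continuous (iter n f).
Proof.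
move=> hf; elim: n => [|n IH] x; first exact: cvg_id.
exact: (continuous_comp (IH x) (hf _)).
Qed.

Lemma open_NxB (Tinv : cantor_space -> cantor_space) (B : set cantor_space) k :
  continuous Tinv -> open B -> closed B -> open [set y | NxB_is Tinv B y k].
Proof.
move=> hc oB cB.
have E : forall k, open [set y | forall j, (j < k)%N -> ~ B (iter j Tinv y)].
  elim=> [|n IH].
    have -> : [set y | forall j, (j < 0)%N -> ~ B (iter j Tinv y)] = setT.
      by apply/seteqP; split => // y _ j.
    exact: openT.
  have -> : [set y | forall j, (j < n.+1)%N -> ~ B (iter j Tinv y)] =
    [set y | forall j, (j < n)%N -> ~ B (iter j Tinv y)] `&`
    (iter n Tinv @^-1` (~` B)).
    apply/seteqP; split => y /=.
      by move=> H; split => [j Hj|]; apply: H => //; exact: ltnW.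
    move=> [H1 H2] j; rewrite ltnS leq_eqVlt => /orP [/eqP -> //|]; exact: H1.
  apply: openI => //; move/continuousP: (iter_cont _ n hc); apply.
  by rewrite openC.
have -> : [set y | NxB_is Tinv B y k] =
  (iter k Tinv @^-1` B) `&` [set y | forall j, (j < k)%N -> ~ B (iter j Tinv y)].
  by apply/seteqP; split => y [].
apply: openI => //; move/continuousP: (iter_cont _ k hc); apply; exact: oB.
Qed.

Lemma remove_pt (O : set cantor_space) q : open O -> O !=set0 ->
  open (O `&` ~` [set q]) /\ O `&` ~` [set q] !=set0.
Proof.
move=> oO [w Ow]; split.
  apply: openI => //; rewrite openC.
  exact: (accessible_closed_set1 (hausdorff_accessible cantor_space_hausdorff)).
case: (pselect (w = q)) => [Hw|Hw]; last by exists w.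
have [_ Hl] := cantor_perfect.
have : limit_point [set: cantor_space] q by rewrite Hl.
move=> /(_ O); case.
  by rewrite -Hw; apply: open_nbhs_nbhs; split.
by move=> y [/eqP ynq _ Oy]; exists y; split.
Qed.

Lemma cont_fmapX (T : cantor_space -> cantor_space) (A : set cantor_space) :
  continuous T -> open A -> closed A -> continuous (fmapX T A).
Proof.
move=> hT oA cA p Q; rewrite fmapXE /nbhs /= => -[[P1 P2] [h1 h2] sub].
have hTP : nbhs p.1 (T @^-1` P1) by exact: hT.
case: (pselect (A (T p.1))) => HA.
- exists (T @^-1` P1 `&` T @^-1` A, [set p.2]).
    split => /=; last by [].
    apply: filterI => //; apply: hT; exact: open_nbhs_nbhs.
    move=> [y b] [[/= Py Ay] /= ->]; rewrite /= fmapXE /=.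
    apply: sub; split => //=.
    rewrite (asboolT Ay); rewrite (asboolT HA) in h2; exact: nbhs_singleton h2.
- exists (T @^-1` P1 `&` T @^-1` (~` A), [set p.2]).
    split => /=; last by [].
    apply: filterI => //; apply: hT; apply: open_nbhs_nbhs; split => //.
    by rewrite openC.
    move=> [y b] [[/= Py Ay] /= ->]; rewrite /= fmapXE /=.
    apply: sub; split => //=.
    rewrite (asboolF Ay); rewrite (asboolF HA) in h2; exact: nbhs_singleton h2.
Qed.

Lemma closed_Xhat (A B : set cantor_space) :
  open B -> A `&` B = set0 -> A `|` B = setT -> closed (Xhat A B).
Proof.
move=> oB AB0 ABT.
have -> : Xhat A B = ~` [set p | B p.1 /\ p.2 = true].
  apply/seteqP; split => [[y b]|[y b]]; rewrite /Xhat /=.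
    case=> [Ay [By _]|[By Hb] [_ Hb']]; first exact: (notAB _ _ AB0 _ Ay By).
    by rewrite Hb in Hb'.
  move=> H; case: (AorB _ _ ABT y) => [Ay|By]; [by left| right; split => //].
  by case: b H => // H; exfalso; apply: H.
rewrite closedC openE => -[y b] [/= By ->].
exists (B, [set true]); first by split => //=; apply: open_nbhs_nbhs.
by move=> [z c] [Bz Hc]; split.
Qed.

Lemma trans_fwd (T Tinv : cantor_space -> cantor_space) (x0 : cantor_space)
  (A B V W : set cantor_space) (m : nat) :
  continuous T -> continuous Tinv -> cancel T Tinv -> cancel Tinv T ->
  (forall x, x <> x0 -> forall m : nat, (0 < m)%N ->
     dense [set zpow T Tinv (m%:Z * k)%R x | k in [set: int]]) ->
  A x0 -> A `&` B = set0 -> closed B -> (0 < m)%N ->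
  open V -> V `<=` B -> V !=set0 -> open W -> W !=set0 ->
  exists u, V u /\ exists j, W (iter (m * j) T u).
Proof.
move=> hT hTi TK TKi hd Ax0 AB0 cB m0 oV VB [z Vz] oW W0.
apply: contrapT => H.
have Hn : forall u j, V u -> ~ W (iter (m * j) T u).
  by move=> u j Vu Wj; apply: H; exists u; split => //; exists j.
have zx0 : z <> x0.
  by move=> E; apply: (notAB _ _ AB0 x0) => //; rewrite -E; exact: VB.
pose y (i : int) := zpow T Tinv (m%:Z * i)%R z.
have hdz := hd z zx0 m m0.
have D : forall n (O : set cantor_space), open O -> O !=set0 ->
    exists i, (n <= `|i|)%N /\ O (y i).
  elim=> [|n IH] O oO O0.
    have [w [Ow [i _ Ei]]] := hdz O O0 oO.
    by exists i; split => //; rewrite /y Ei.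
  have [i [ni Oi]] := IH O oO O0.
  case: (ltnP n `|i|) => [lt|le]; first by exists i.
  have [op1 ne1] := remove_pt _ (y i) oO O0.
  have [op2 ne2] := remove_pt _ (y (- i)%R) op1 ne1.
  have [i' [ni' [[Oi' Ni'1] Ni'2]]] := IH _ op2 ne2.
  exists i'; split => //.
  rewrite ltn_neqAle ni' andbT; apply/eqP => E.
  have : i' = i \/ i' = (- i)%R by lia.
  by case=> Ei; [apply: Ni'1 | apply: Ni'2]; rewrite /= Ei.
have [i0 [_ Wi0]] := D 0%N W oW W0.
have Vt : forall n, exists k : nat, (n <= k)%N /\ V (iter (m * k) T z).
  move=> n; have [i [ni Vi]] := D (n + `|i0|)%N V oV (ex_intro _ z Vz).
  have lt : (i0 < i)%R.
    rewrite ltNge; apply/negP => le.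
    apply: (Hn (y i) `|i0 - i|%N Vi).
    have -> : iter (m * `|i0 - i|) T (y i) = y i0.
      rewrite /y -(zpowDn _ _ TKi); congr zpow; lia.
    exact: Wi0.
  have : exists k : nat, i = Posz k by exists `|i|%N; lia.
  case=> k Ek; exists k; split; first lia.
  by move: Vi; rewrite /y Ek zpowM_pos -iterM mulnC.
pose s n := iter (m * n) T z.
pose F := filter_from [set: nat]
  (fun n0 => [set s n | n in [set n | (n0 <= n)%N /\ V (s n)]]).
have FF : ProperFilter F.
  apply: filter_from_proper.
    apply: filter_fromT_filter; first by exists 0%N.
    move=> i j; exists (maxn i j) => _ [n [hn Vn] <-].
    by split; exists n => //; split => //; apply: leq_trans hn; rewrite ?leq_maxl ?leq_maxr.
  move=> n0 _; have [k [hk Vk]] := Vt n0; exists (s k); exists k => //.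
have [p [_ clp]] := cantor_space_compact FF (ex_intro2 _ _ 0%N I (fun _ _ => I)).
pose Om (q : cantor_space) := forall N, nbhs q N -> forall n0, exists n, (n0 <= n)%N /\ N (s n).
have Fn : forall n0, F [set s n | n in [set n | (n0 <= n)%N /\ V (s n)]].
  by move=> n0; exists n0.
have Bp : B p.
  apply: contrapT => nBp.
  have : nbhs p (~` B) by apply: open_nbhs_nbhs; split => //; rewrite openC.
  move=> /(clp _ _ (Fn 0%N)) [w [[n [_ Vn] <-] nB]]; apply: nB; exact: VB.
have Omp : Om p.
  move=> N Np n0; have [w [[n [hn _] <-] Nw]] := clp _ _ (Fn n0) Np.
  by exists n.
have OmT : forall q, Om q -> Om (iter m T q).
  move=> q Oq N HN n0.
  have Hq := iter_cont _ m hT q N HN.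
  have [n [hn Nn]] := Oq _ Hq n0.
  exists n.+1; split; first exact: leqW.
  by rewrite /s mulnS iterD.
have OmTi : forall q, Om q -> Om (iter m Tinv q).
  move=> q Oq N HN n0.
  have Hq := iter_cont _ m hTi q N HN.
  have [n [hn Nn]] := Oq _ Hq n0.+1.
  case: n hn Nn => [|n] hn Nn //.
  exists n; split => //.
  by move: Nn; rewrite /= /s mulnS iterD (iterK _ _ TK).
have OmZ : forall k : int, Om (zpow T Tinv (m%:Z * k)%R p).
  case=> n; [rewrite zpowM_pos | rewrite zpowM_neg]; elim: n => [|n IH] //=.
  - exact: OmT.
  - exact: OmTi.
  - exact: OmTi.
have px0 : p <> x0.
  by move=> E; apply: (notAB _ _ AB0 x0) => //; rewrite -E.
have [w [Ww [k _ Ek]]] := hd p px0 m m0 W W0 oW.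
have HW : nbhs (zpow T Tinv (m%:Z * k)%R p) W.
  by apply: open_nbhs_nbhs; split => //; rewrite Ek.
have [n [_ Wn]] := OmZ k W HW 0%N.
exact: (Hn z n Vz Wn).
Qed.


Arguments closed_Xhat {A B}.
Arguments graph_Xhat {Tinv A B}.
Arguments cont_fmapX {T A}.
Arguments graph_iter {T Tinv A B}.
Arguments NxB_uniq {Tinv B y k k'}.
Arguments trans_fwd {T Tinv x0 A B V W m}.

Theorem lemma7p1 (T Tinv : cantor_space -> cantor_space) (x0 : cantor_space)
  (A B : set cantor_space) :
  continuous T -> continuous Tinv -> cancel T Tinv -> cancel Tinv T ->
  T x0 = x0 -> (forall x, T x = x -> x = x0) ->
  (forall x, x <> x0 -> forall m : nat, (0 < m)%N ->
     dense [set zpow T Tinv (m%:Z * k)%R x | k in [set: int]]) ->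
  clopen A -> clopen B -> A `&` B = set0 -> A `|` B = setT -> A x0 ->
  forall m : nat, (0 < m)%N ->
    [/\ closed (Xset Tinv A B), Xset Tinv A B `<=` Xhat A B,
        [set p | B p.1 /\ p.2 = false] `<=` Xset Tinv A B,
        image (Xset Tinv A B) (iter m (fmapX T A)) `<=` Xset Tinv A B &
        forall S : set (cantor_space * bool),
          closed S -> S `<=` Xhat A B -> [set p | B p.1 /\ p.2 = false] `<=` S ->
          image S (iter m (fmapX T A)) `<=` S -> Xset Tinv A B `<=` S].
Proof.
move=> hT hTi TK TKi Tx0 fix0 hd [oA cA] [oB cB] AB0 ABT Ax0 m m0.
pose G := graphN Tinv B.
have cX : closure G `<=` Xhat A B.
  move=> q h; apply: (closed_Xhat oB AB0 ABT).
  by move: h; apply: closureS; exact: (graph_Xhat ABT).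
have EX : Xset Tinv A B = closure G.
  by apply/seteqP; split => q; [case | move=> h; split => //; exact: cX].
rewrite EX; split.
- exact: closed_closure.
- exact: cX.
- move=> [y b] /= [By Hb]; apply: subset_closure; exists 0%N; split => /=.
    by split => // j.
  by rewrite Hb.
- move=> _ [q Gq <-] Q HQ.
  have HQ' := iter_cont _ m (cont_fmapX hT oA cA) q Q HQ.
  have [[y b] [[k [Hk /= Eb]] Qg]] := Gq _ HQ'.
  have [k' [Hk' E]] := graph_iter TK AB0 ABT m y k Hk.
  exists (iter m (fmapX T A) (y, b)); split => //.
  by rewrite Eb E; exists k'.
- move=> S cS SX BS fS.
  suff GS : G `<=` S by move=> q /(closureS GS); apply: cS.
  move=> [x b] [k [Hk /= Eb]]; apply: cS => Q.
  rewrite /nbhs /= => -[[P1 P2] [h1 h2] sub].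
  move: h1; rewrite nbhsE => -[P1' [oP1' P1'x] sP1].
  pose W := P1' `&` [set y | NxB_is Tinv B y k].
  have oW : open W by apply: openI => //; exact: open_NxB.
  have Wx : W x by split.
  pose V := iter k T @^-1` W.
  have oV : open V by move/continuousP: (iter_cont _ k hT); apply.
  have VB : V `<=` B.
    by move=> v [_ [hv _]]; rewrite (iterK _ _ TK) in hv.
  have V0 : V !=set0.
    by exists (iter k Tinv x); rewrite /V /= (iterKi _ _ TKi).
  have [u [Vu [j [Wj1 Wj2]]]] :=
    trans_fwd hT hTi TK TKi hd Ax0 AB0 cB m0 oV VB V0 oW (ex_intro _ x Wx).
  have Su : S (u, false) by apply: BS; split => //; exact: VB.
  have Sit : forall n, S (iter n (iter m (fmapX T A)) (u, false)).
    elim=> [|n IH] //=; apply: fS; by exists (iter n (iter m (fmapX T A)) (u, false)).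
  have Hu0 : NxB_is Tinv B u 0 by split => //; exact: VB.
  have [k' [Hk' E]] := graph_iter TK AB0 ABT (m * j) u 0%N Hu0.
  have E' : iter (m * j) (fmapX T A) (u, false) = (iter (m * j) T u, odd k') := E.
  have kk : k' = k by apply: (NxB_uniq Hk' Wj2).
  exists (iter (m * j) T u, odd k); split.
    by have := Sit j; rewrite -iterM mulnC E' kk.
  apply: sub; split => /=; first exact: sP1.
  by rewrite Eb in h2; exact: nbhs_singleton h2.
Qed.
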